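(* Consider the problem $\min_{x\in\mathbb{R}^n}\max_{y\in\Delta}F(x)^Ty$ and assume strict complementarity holds. For any $x^*$ for which some $y$ makes $(x^*,y)$ a stationary solution, there is exactly one $y\in\Delta$ such that $(x^*,y)$ is a stationary solution, and exactly one pair $(\mu,\nu)$ such that $(x^*,y,\mu,\nu)$ satisfies the KKT system.
   Context: $F(x)=(f_1(x),\dots,f_m(x))^T$ is a smooth map $\mathbb{R}^n\to\mathbb{R}^m$ and $\Delta$ the probability simplex in $\mathbb{R}^m$. KKT system for $(x^*,y,\mu,\nu)$: $\sum_iy_i\nabla f_i(x^* )=0$, $\sum_iy_i=1$, $y_i\ge0$, $\mu-\nu_i=f_i(x^* )$, $\nu_i\ge0$, $\nu_iy_i=0$ for all $i$; $(x^*,y)$ is a stationary solution if the KKT system has a solution $(\mu,\nu)$. Strict complementarity: for every solution of the KKT system, $\nu_i>0$ for all $i$ with $y_i=0$. *)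

(* Defs.v *)
From HB Require Import structures.
From mathcomp Require Import all_boot all_order all_algebra.
From mathcomp Require Import all_classical all_reals all_analysis.
Set Implicit Arguments. Unset Strict Implicit. Unset Printing Implicit Defensive.
Import Order.TTheory GRing.Theory Num.Theory.
Import numFieldNormedType.Exports.
Local Open Scope ring_scope.

Section Defs.
Variables (R : realType) (n m : nat).

Fixpoint Ck (k : nat) (f : 'rV[R]_n -> 'rV[R]_m) : Prop :=
  match k with
  | 0 => continuous f
  | k'.+1 => continuous f /\
      forall v : 'rV[R]_n, (forall x, derivable f x v) /\ Ck k' (fun x => 'D_v f x)
  end.

Definition smooth (F : 'rV[R]_n -> 'rV[R]_m) : Prop := forall k, Ck k F.

Definition comp (F : 'rV[R]_n -> 'rV[R]_m) (i : 'I_m) : 'rV[R]_n -> R :=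
  fun x => F x 0 i.

Definition grad (f : 'rV[R]_n -> R) (x : 'rV[R]_n) : 'rV[R]_n :=
  \row_(j < n) 'D_(delta_mx 0 j) f x.

Definition in_simplex (y : 'rV[R]_m) : Prop :=
  (forall i, 0 <= y 0 i) /\ \sum_(i < m) y 0 i = 1.

Definition KKT (F : 'rV[R]_n -> 'rV[R]_m) (x : 'rV[R]_n) (y : 'rV[R]_m)
  (mu : R) (nu : 'rV[R]_m) : Prop :=
  \sum_(i < m) y 0 i *: grad (comp F i) x = 0 /\
  \sum_(i < m) y 0 i = 1 /\
  (forall i, 0 <= y 0 i) /\
  (forall i, mu - nu 0 i = comp F i x) /\
  (forall i, 0 <= nu 0 i) /\
  (forall i, nu 0 i * y 0 i = 0).

Definition stationary (F : 'rV[R]_n -> 'rV[R]_m) (x : 'rV[R]_n) (y : 'rV[R]_m) : Prop :=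
  exists mu nu, KKT F x y mu nu.

Definition strict_complementarity (F : 'rV[R]_n -> 'rV[R]_m) : Prop :=
  forall x y mu nu, KKT F x y mu nu -> forall i, y 0 i = 0 -> 0 < nu 0 i.

End Defs.

(* Main.v *)
Require Import Defs.
From HB Require Import structures.
From mathcomp Require Import all_boot all_order all_algebra.
From mathcomp Require Import all_classical all_reals all_analysis.
Import Order.TTheory GRing.Theory Num.Theory.
Import numFieldNormedType.Exports.
Local Open Scope ring_scope.

Lemma kkt_mu_le {R : realType} {n m : nat} {F : 'rV[R]_n -> 'rV[R]_m} {x y mu nu y' mu' nu'} :
  KKT F x y mu nu -> KKT F x y' mu' nu' -> mu <= mu'.
Proof.
move=> [_ [s1 [y0 [e1 [n0 c0]]]]] [_ [_ [_ [e2 [n2 _]]]]].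
have [i yi] : exists i, y 0 i != 0.
  apply/existsP; apply: contraT; rewrite negb_exists => /forallP H.
  move: s1; rewrite big1; last by move=> i _; exact/eqP/negPn/H.
  by move/eqP; rewrite eq_sym oner_eq0.
have nui : nu 0 i = 0 by move: (c0 i) => /eqP; rewrite mulf_eq0 (negbTE yi) orbF => /eqP.
have := e1 i; rewrite nui subr0 => ->; rewrite -(e2 i).
by rewrite lerBlDr lerDl.
Qed.

Lemma kkt_munu {R : realType} {n m : nat} {F : 'rV[R]_n -> 'rV[R]_m} {x y mu nu y' mu' nu'} :
  KKT F x y mu nu -> KKT F x y' mu' nu' -> mu = mu' /\ nu = nu'.
Proof.
move=> K1 K2.
have emu : mu = mu' by apply/le_anti; rewrite (kkt_mu_le K1 K2) (kkt_mu_le K2 K1).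
split=> //; apply/matrixP => a j; rewrite (ord1 a).
case: K1 => [_ [_ [_ [e1 _]]]]; case: K2 => [_ [_ [_ [e2 _]]]].
have := e1 j; rewrite -(e2 j) emu => /eqP; rewrite -subr_eq0 opprB addrC.
by rewrite !addrA subrK -opprB oppr_eq0 subr_eq0 => /eqP.
Qed.

Lemma kkt_y_uniq {R : realType} {n m : nat} {F : 'rV[R]_n -> 'rV[R]_m}
  (hsc : strict_complementarity F) {x y mu nu y' mu' nu'} :
  KKT F x y mu nu -> KKT F x y' mu' nu' -> y' = y.
Proof.
move=> K1 K2; have [emu enu] := kkt_munu K1 K2; subst mu' nu'.
apply/eqP; apply: contraT => neq.
pose d := fun j => y' 0 j - y 0 j.
have [i0 di0] : exists i, d i < 0.
  apply/existsP; apply: contraT; rewrite negb_exists => /forallP H.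
  move/eqP: neq => neq; exfalso; apply: neq; apply/matrixP => a j; rewrite (ord1 a).
  have sd : \sum_(k < m) d k = 0.
    case: K1 => [_ [s1 _]]; case: K2 => [_ [s2 _]].
    by rewrite /d sumrB s1 s2 subrr.
  have := (psumr_eq0P (P := predT) (F := d)) => /(_ _ sd) E.
  have: d j = 0 by apply: E => // k _; move: (H k); rewrite -leNgt.
  by move/eqP; rewrite subr_eq0 => /eqP.
pose G := fun j => y 0 j / - d j.
case: (@arg_minP _ R 'I_m i0 (fun j => d j < 0) G di0) => i di Hmin.
set t := G i.
case: K1 => [g1 [s1 [y1 [e1 [n1 c1]]]]]; case: K2 => [g2 [s2 [y2 [e2 [n2 c2]]]]].
have ndi : 0 < - d i by rewrite oppr_gt0.
have yi : 0 < y 0 i.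
  rewrite lt_def y1 andbT; apply/eqP => yi0.
  by move: (y2 i); rewrite leNgt; move: di; rewrite /d yi0 subr0 => ->.
have nui : nu 0 i = 0 by move: (c1 i) => /eqP; rewrite mulf_eq0 (gt_eqF yi) orbF => /eqP.
have t0 : 0 <= t by rewrite /t /G divr_ge0 // ltW.
pose z := y + t *: (y' - y).
have zE j : z 0 j = y 0 j + t * d j by rewrite /z !mxE.
have K : KKT F x z mu nu.
  split; last split; last split; last split; last split.
  - under eq_bigr => j _ do rewrite zE scalerDl -scalerA.
    rewrite big_split /= -scaler_sumr /d g1 add0r.
    under eq_bigr => j _ do rewrite scalerBl.
    by rewrite sumrB g1 g2 subrr scaler0.
  - by under eq_bigr => j _ do rewrite zE; rewrite big_split /= -mulr_sumr /d sumrB s1 s2 subrr mulr0 addr0.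
  - move=> j; rewrite zE; case: (ltP (d j) 0) => dj.
    + have := Hmin j dj; rewrite /t /G => H.
      have ndj : 0 < - d j by rewrite oppr_gt0.
      rewrite ler_pdivlMr // in H.
      by rewrite /t /G -[d j]opprK mulrN subr_ge0.
    + by rewrite addr_ge0 // mulr_ge0.
  - exact: e1.
  - exact: n1.
  - move=> j; rewrite zE /d mulrDr mulrA (mulrC _ t) -mulrA mulrBr c1 c2 subrr mulr0 addr0.
    by [].
have zi : z 0 i = 0.
  by rewrite zE /t /G -(mulrNN (y 0 i / - d i) (d i)) mulNr divfK ?gt_eqF // subrr.
have := hsc _ _ _ _ K i zi; by rewrite nui ltxx.
Qed.


Theorem corollary1 (R : realType) (n m : nat) (F : 'rV[R]_n -> 'rV[R]_m)
  (hF : smooth F) (hsc : strict_complementarity F) (xs : 'rV[R]_n) :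
  (exists y, stationary F xs y) ->
  exists y : 'rV[R]_m,
    (in_simplex y /\ stationary F xs y) /\
    (forall y' : 'rV[R]_m, in_simplex y' /\ stationary F xs y' -> y' = y) /\
    (exists! p : R * 'rV[R]_m, KKT F xs y p.1 p.2).
Proof.
move=> [y [mu [nu K]]].
exists y; split; [split; last by exists mu, nu|split].
- by case: K => [_ [s [y0 _]]]; split.
- by move=> y' [_ [mu' [nu' K']]]; exact: (kkt_y_uniq hsc K K').
- exists (mu, nu); split => // [[mu' nu']] /= K'.
  by have [-> ->] := kkt_munu K K'.
Qed.
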